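(* Let $\{\alpha_n\}$ and $\{\beta_n\}$ be sequences in $[0,1]$, $\{\tau_n\}$ a nonnegative sequence, and $r\in\mathbb Z^+$ such that $\sum_{n=1}^\infty\tau_n|\alpha_n-\beta_n|^r<\infty$. If $\sum_{n=1}^\infty\tau_n\beta_n<\infty$, then $\sum_{n=1}^\infty\tau_n\alpha_n^r<\infty$. *)

(* Defs.v *)
From Stdlib Require Import Reals.
From Coquelicot Require Import Coquelicot.

(* Main.v *)
Require Import Defs.
From Stdlib Require Import Reals Lra Lia.
From Coquelicot Require Import Coquelicot.
Open Scope R_scope.

Lemma key (a b : R) (r : nat) : 0 <= a <= 1 -> 0 <= b <= 1 -> (1 <= r)%nat ->
  a ^ r <= 2 ^ r * (Rabs (a - b) ^ r + b).
Proof.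
  intros Ha Hb Hr.
  assert (Hx : 0 <= Rabs (a - b)) by apply Rabs_pos.
  assert (Hax : a <= Rabs (a - b) + b).
  { destruct (Rle_dec b a).
    rewrite Rabs_right; lra. rewrite Rabs_left; lra. }
  revert Hx Hax. generalize (Rabs (a - b)). intros x Hx Hax.
  assert (H1 : a ^ r <= (x + b) ^ r) by (apply pow_incr; lra).
  assert (Hbr : b ^ r <= b).
  { destruct r as [|k]; [lia|]. simpl.
    assert (b ^ k <= 1 ^ k) by (apply pow_incr; lra). rewrite pow1 in H.
    nra. }
  assert (Hxr : 0 <= x ^ r) by (apply pow_le; lra).
  assert (Hbr0 : 0 <= b ^ r) by (apply pow_le; lra).
  assert (H2r : 0 <= 2 ^ r) by (apply pow_le; lra).
  destruct (Rle_dec b x).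
  - assert ((x + b) ^ r <= (2 * x) ^ r) by (apply pow_incr; lra).
    rewrite Rpow_mult_distr in H. nra.
  - assert ((x + b) ^ r <= (2 * b) ^ r) by (apply pow_incr; lra).
    rewrite Rpow_mult_distr in H. nra.
Qed.

Theorem lemma4 (alpha beta tau : nat -> R) (r : nat) :
  (forall n, 0 <= alpha n <= 1) ->
  (forall n, 0 <= beta n <= 1) ->
  (forall n, 0 <= tau n) ->
  (1 <= r)%nat ->
  ex_series (fun n => tau n * (Rabs (alpha n - beta n)) ^ r) ->
  ex_series (fun n => tau n * beta n) ->
  ex_series (fun n => tau n * (alpha n) ^ r).
Proof.
  intros Ha Hb Ht Hr H1 H2.
  apply (@ex_series_le R_AbsRing R_CompleteNormedModule _ (fun n => scal (2 ^ r) (plus (tau n * (Rabs (alpha n - beta n)) ^ r) (tau n * beta n)))).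
  2: { apply (@ex_series_scal_l R_AbsRing R_NormedModule). apply (@ex_series_plus R_AbsRing R_NormedModule); assumption. }
  intros n. unfold norm, abs, scal, mult, plus; simpl. unfold mult, plus; simpl.
  specialize (key (alpha n) (beta n) r (Ha n) (Hb n) Hr). intro K.
  assert (0 <= alpha n ^ r) by (apply pow_le; apply Ha).
  assert (0 <= tau n * alpha n ^ r) by (apply Rmult_le_pos; auto).
  rewrite Rabs_right; [|lra].
  specialize (Ht n).
  assert (tau n * alpha n ^ r <= tau n * (2 ^ r * (Rabs (alpha n - beta n) ^ r + beta n))) by (apply Rmult_le_compat_l; auto).
  lra.
Qed.
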